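(* Let $u\in L_{\mathrm{up}}$ and $\ell\in F_u$. Then $P_{u,\ell}$ is nonempty and is the edge set of a path.
   Context: Let $(G=(V,E),L,w)$ be a WTAP instance (spanning tree $G$, links $L\subseteq\binom V2$, weights $w>0$) with a fixed root $r\in V$, and let $F\subseteq L$ be a WTAP solution, i.e. $\bigcup_{\ell\in F}P_\ell=E$, where $P_\ell$ is the edge set of the tree path between the endpoints of $\ell$ and $V_\ell$ its vertex set. Ancestors of $v$ are the vertices on the $r$-$v$ path in $G$ (including $r$ and $v$); descendants are defined reciprocally. $\mathrm{apex}(\ell)$ is the vertex of $V_\ell$ closest to $r$. An up-link is a link $\{t,b\}$ with $t$ an ancestor of $b$; $L_{\mathrm{up}}$ is the set of up-links. For $v\in V$ let $B_v=\{\ell\in F\colon \mathrm{apex}(\ell)\text{ is a descendant of }v\}$. For an up-link $u=\{t,b\}$ with $t$ an ancestor of $b$, let $v_u$ be the ancestor of $t$ farthest from $r$ such that $P_u\subseteq\bigcup_{\ell\in B_{v_u}}P_\ell$, and fix $F_u\subseteq B_{v_u}$ inclusion-wise minimal with $P_u\subseteq\bigcup_{\ell\in F_u}P_\ell$. For $\ell\in F_u$ let $P_{u,\ell}=P_u\setminus\bigcup_{\bar\ell\in F_u\setminus\{\ell\}}P_{\bar\ell}$. *)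

(* Defs.v *)
From HB Require Import structures.
From mathcomp Require Import all_boot all_order all_algebra.
From mathcomp Require Import boolp.
Set Implicit Arguments. Unset Strict Implicit. Unset Printing Implicit Defensive.

Section WTAP.
Variable V : finType.
Variable adj : rel V.

Definition edgesG : {set {set V}} :=
  [set e | `[< exists x y, adj x y /\ e = [set x; y] >]].

Definition spath (x : V) (p : seq V) : bool := path adj x p && uniq (x :: p).

Definition pedges (x : V) (p : seq V) : {set {set V}} :=
  [set:: [seq [set a.1; a.2] | a <- zip (x :: p) p]].
Definition pverts (x : V) (p : seq V) : {set V} := [set:: x :: p].

(* G is a tree: connected and without cycles (of length >= 3). *)
Definition is_tree : Prop :=
  (forall x y, connect adj x y) /\
  (forall x p, 2 <= size p -> spath x p -> ~~ adj (last x p) x).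

Definition tpath_edges (x y : V) : {set {set V}} :=
  [set e | `[< exists p, spath x p /\ last x p = y /\ e \in pedges x p >]].
Definition tpath_verts (x y : V) : {set V} :=
  [set z | `[< exists p, spath x p /\ last x p = y /\ z \in pverts x p >]].

Definition Pl (l : {set V}) : {set {set V}} :=
  [set e | `[< exists a b, a != b /\ l = [set a; b] /\ e \in tpath_edges a b >]].
Definition Vl (l : {set V}) : {set V} :=
  [set z | `[< exists a b, a != b /\ l = [set a; b] /\ z \in tpath_verts a b >]].

Definition coverL (S : {set {set V}}) : {set {set V}} := \bigcup_(l in S) Pl l.

Variable r : V.

Definition dist (v : V) : nat := #|tpath_edges r v|.
Definition anc (a v : V) : bool := a \in tpath_verts r v.

Definition is_apex (l : {set V}) (a : V) : bool :=
  (a \in Vl l) && [forall x in Vl l, dist a <= dist x].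

Definition Bset (F : {set {set V}}) (v : V) : {set {set V}} :=
  [set l in F | [exists a, is_apex l a && anc v a]].

Definition is_uplink (u : {set V}) (t b : V) : Prop :=
  t != b /\ u = [set t; b] /\ anc t b.

Definition Pul (Fu : {set {set V}}) (u l : {set V}) : {set {set V}} :=
  Pl u :\: \bigcup_(l' in Fu :\ l) Pl l'.

End WTAP.

(* Main.v *)
Require Import Defs.
From HB Require Import structures.
From mathcomp Require Import all_boot all_order all_algebra.
From mathcomp Require Import boolp zify.
Set Implicit Arguments. Unset Strict Implicit. Unset Printing Implicit Defensive.

Section Aux.
Variable V : finType.
Variable adj : rel V.
Hypothesis adj_sym : symmetric adj.
Hypothesis Gacyc : forall x p, 2 <= size p -> spath adj x p -> ~~ adj (last x p) x.

Lemma notin_take_index (z : V) Q : uniq Q -> z \notin take (index z Q) Q.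
Proof.
move=> uQ; apply/negP => /(nthP z) [k hk].
have hks : k < index z Q by move: hk; rewrite (size_takel (index_size z Q)).
rewrite nth_take // => hz.
have kQ : k < size Q by apply: leq_trans hks (index_size _ _).
by move: hks; rewrite -hz index_uniq // ltnn.
Qed.

Lemma no_fork x P Q : path adj x P -> path adj x Q -> uniq (x :: P) -> uniq (x :: Q) ->
  P != [::] -> Q != [::] -> last x P = last x Q -> head x P != head x Q -> False.
Proof.
move=> pP pQ uP uQ nP nQ eL nH.
have lP : last x P \in P by case: P nP {pP uP eL nH} => // a p _; rewrite /= mem_last.
have lQ : last x Q \in Q by case: Q nQ {pQ uQ eL nH} => // a p _; rewrite /= mem_last.
have hasPQ : has (mem Q) P by apply/hasP; exists (last x P) => //; rewrite eL.
set i := find (mem Q) P.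
have hi : i < size P by rewrite -has_find.
set z := nth x P i.
have zQ : z \in Q by apply: (nth_find x hasPQ).
set j := index z Q.
have hj : j < size Q by rewrite index_mem.
set P1 := take i.+1 P. set Q1 := take j Q.
have sP1 : size P1 = i.+1 by rewrite size_takel.
have sQ1 : size Q1 = j by rewrite size_takel // ltnW.
have lP1 : last x P1 = z.
  by rewrite -nth_last sP1 /= nth_take.
have pP1 : path adj x P1.
  by move: pP; rewrite -(cat_take_drop i.+1 P) cat_path => /andP[].
have sQz : sorted adj (x :: rcons Q1 z).
  have : sorted adj (take j.+2 (x :: Q)) by apply: take_sorted.
  by rewrite /= (take_nth x) // nth_index.
have sQr : path adj z (rcons (rev Q1) x).
  have : sorted adj (rev (x :: rcons Q1 z)).
    rewrite rev_sorted.
    have -> : (fun a b : V => adj b a) = adj.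
      by apply: funext => a; apply: funext => b; rewrite adj_sym.
    exact: sQz.
  by rewrite rev_cons rev_rcons.
move: sQr; rewrite rcons_path => /andP[pQr aL].
set c := P1 ++ rev Q1.
have uQ' : uniq Q by move: uQ => /andP[].
have xP : x \notin P by move: uP => /andP[].
have xQ : x \notin Q by move: uQ => /andP[].
have sc : spath adj x c.
  apply/andP; split; first by rewrite cat_path pP1 lP1.
  rewrite /= cat_uniq mem_cat negb_or rev_uniq mem_rev.
  apply/andP; split.
    apply/andP; split; apply/negP => /mem_take; by apply/negP.
  apply/and3P; split.
  - by apply: take_uniq; move: uP => /andP[].
  - apply/hasP => -[v]; rewrite mem_rev => vQ1 vP1.
    move: vP1 => /(nthP x) [k hk]; rewrite sP1 in hk.
    rewrite nth_take // => hv.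
    have vQ : v \in Q by apply: mem_take vQ1.
    move: hk; rewrite ltnS leq_eqVlt => /orP[/eqP ek|lk].
      by move: vQ1; rewrite -hv ek; move/negP: (notin_take_index z uQ').
    by move: (before_find x lk); rewrite hv /= vQ.
  - by apply: take_uniq.
have c2 : 2 <= size c.
  rewrite size_cat size_rev sP1 sQ1.
  rewrite addSn ltnS lt0n addn_eq0; apply/negP => /andP[/eqP i0 /eqP j0].
  move/negP: nH; apply.
  have : nth x Q j = z by rewrite nth_index.
  rewrite j0 /z i0.
  by rewrite -!nth0 => ->.
move: (Gacyc c2 sc); rewrite /c last_cat lP1 aL.
by [].
Qed.

Lemma spath_uniq x p p' : spath adj x p -> spath adj x p' -> last x p = last x p' -> p = p'.
Proof.
elim: p x p' => [|a p1 IH] x [|a' p1'] //=.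
- move=> _ /andP[_ u] e; move: u; rewrite /= e => /andP[/negP h _]; exfalso; apply: h.
  by rewrite mem_last.
- move=> /andP[_ u] _ e; move: u; rewrite /= -e => /andP[/negP h _]; exfalso; apply: h.
  by rewrite mem_last.
move=> /andP[pP uP] /andP[pQ uQ] eL.
case: (a =P a') => [ea|na].
  subst a'; rewrite (IH a p1') //.
  - by rewrite /spath; move: pP uP => /= /andP[_ h1] /andP[_ h2]; rewrite h1 h2.
  - by rewrite /spath; move: pQ uQ => /= /andP[_ h1] /andP[_ h2]; rewrite h1 h2.
exfalso; apply: (@no_fork x (a :: p1) (a' :: p1')) => //=.
by apply/eqP.
Qed.

Variable r : V.
Definition simple (w : seq V) := sorted adj w && uniq w.
Definition Ew (w : seq V) i : {set V} := [set nth r w i; nth r w i.+1].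

Lemma simple_uniq w1 w2 : simple w1 -> simple w2 -> 0 < size w1 -> 0 < size w2 ->
  nth r w1 0 = nth r w2 0 -> last r w1 = last r w2 -> w1 = w2.
Proof.
case: w1 => // x p; case: w2 => // x' p' /= s1 s2 _ _ ex; subst x'.
by move=> el; rewrite (spath_uniq s1 s2 el).
Qed.

Lemma pedgesP x p e : (e \in pedges x p) = `[< exists2 i, i < size p & e = Ew (x :: p) i >].
Proof.
rewrite /pedges inE.
apply/idP/asboolP.
  elim: p x => [|y p IH] x //=.
  rewrite inE => /orP[/eqP ->|]; first by exists 0.
  by move/IH => [i hi ->]; exists i.+1.
elim: p x => [|y p IH] x [i] //= hi he.
rewrite inE; case: i hi he => [|i] hi he; first by rewrite he eqxx.
apply/orP; right; apply: (IH y); by exists i.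
Qed.

Definition sl (w : seq V) a len := take len (drop a w).
Lemma sl_size w a len : a + len <= size w -> size (sl w a len) = len.
Proof. by move=> h; rewrite /sl size_takel // size_drop; lia. Qed.
Lemma sl_nth w a len k : k < len -> nth r (sl w a len) k = nth r w (a + k).
Proof. by move=> h; rewrite /sl nth_take // nth_drop. Qed.
Lemma sl_simple w a len : simple w -> simple (sl w a len).
Proof.
move=> /andP[s u]; apply/andP; split.
  by apply: take_sorted; apply: drop_sorted.
by apply: take_uniq; apply: drop_uniq.
Qed.
Lemma simple_rev w : simple w -> simple (rev w).
Proof.
move=> /andP[s u]; apply/andP; split; last by rewrite rev_uniq.
rewrite rev_sorted.
have -> : (fun a b : V => adj b a) = adj.
  by apply: funext => a; apply: funext => b; rewrite adj_sym.
exact: s.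
Qed.
Lemma E_rev w c : c.+1 < size w -> Ew (rev w) c = Ew w (size w - c.+2).
Proof.
move=> h; rewrite /Ew !nth_rev; try lia.
rewrite setUC; congr ([set _; _]); congr (nth _ _ _); lia.
Qed.

Lemma conv_fwd w vs m m' al be k : simple w -> simple vs -> m < m' -> m' < size vs ->
  al < be -> be < size w -> nth r w al = nth r vs m -> nth r w be = nth r vs m' ->
  m <= k < m' -> exists2 c, c.+1 < size w & Ew vs k = Ew w c.
Proof.
move=> sw svs hm hm' hab hb ea eb /andP[hk1 hk2].
have z1 : al + (be - al).+1 <= size w by lia.
have z2 : m + (m' - m).+1 <= size vs by lia.
have ss : sl w al (be - al).+1 = sl vs m (m' - m).+1.
  apply: simple_uniq.
  - exact: sl_simple.
  - exact: sl_simple.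
  - by rewrite sl_size.
  - by rewrite sl_size.
  - by rewrite !sl_nth // !addn0.
  - rewrite -!nth_last !sl_size // /= !sl_nth //.
    have -> : al + (be - al) = be by lia.
    have -> : m + (m' - m) = m' by lia.
    exact: eb.
have sz : be - al = m' - m.
  have := congr1 size ss; rewrite !sl_size //; case; lia.
exists (al + (k - m)); first lia.
have e1 : nth r vs k = nth r w (al + (k - m)).
  have hh : k - m < (m' - m).+1 by lia.
  have -> : nth r vs k = nth r vs (m + (k - m)) by congr (nth _ _ _); lia.
  rewrite -(sl_nth vs m hh).
  rewrite -ss sl_nth; last lia.
  congr (nth _ _ _); lia.
have e2 : nth r vs k.+1 = nth r w (al + (k - m)).+1.
  have hh : (k - m).+1 < (be - al).+1 by lia.
  rewrite -addnS -(sl_nth w al hh) ss sl_nth; last lia.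
  rewrite addnS.
  congr (nth _ _ _); lia.
by rewrite /Ew e1 e2.
Qed.

Lemma conv w vs m m' al be k : simple w -> simple vs -> m < m' -> m' < size vs ->
  al < size w -> be < size w -> nth r w al = nth r vs m -> nth r w be = nth r vs m' ->
  m <= k < m' -> exists2 c, c.+1 < size w & Ew vs k = Ew w c.
Proof.
move=> sw svs hm hm' ha hb ea eb hk.
case: (ltngtP al be) => hab.
- exact: (conv_fwd sw svs hm hm' hab hb ea eb hk).
- have h1 : size w - al.+1 < size w - be.+1 by lia.
  have h2 : size w - be.+1 < size (rev w) by rewrite size_rev; lia.
  have e1 : nth r (rev w) (size w - al.+1) = nth r vs m.
    rewrite nth_rev; last lia.
    rewrite -ea; congr (nth _ _ _); lia.
  have e2 : nth r (rev w) (size w - be.+1) = nth r vs m'.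
    rewrite nth_rev; last lia.
    rewrite -eb; congr (nth _ _ _); lia.
  have [c hc ->] := conv_fwd (simple_rev sw) svs hm hm' h1 h2 e1 e2 hk.
  rewrite size_rev in hc.
  rewrite E_rev //; exists (size w - c.+2) => //; lia.
- subst be; exfalso; move: ea; rewrite eb => /eqP.
  have uv : uniq vs by case/andP: svs.
  have hm0 : m < size vs by apply: ltn_trans hm hm'.
  rewrite nth_uniq //.
  by move/eqP => h; move: hm; rewrite h ltnn.
Qed.

Lemma tpath_eq x p : spath adj x p -> tpath_edges adj x (last x p) = pedges x p.
Proof.
move=> sp; apply/setP => e; rewrite inE; apply/asboolP/idP.
  by move=> [p' [sp' [el ep]]]; rewrite (spath_uniq sp' sp el) in ep.
by move=> ep; exists p.
Qed.

Lemma tpath_sym x y : tpath_edges adj x y \subset tpath_edges adj y x.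
Proof.
apply/subsetP => e; rewrite !inE => /asboolP [p [sp [el ep]]]; apply/asboolP.
have sW : simple (rev (x :: p)) by apply: simple_rev.
have eW : rev (x :: p) = last x p :: rev (belast x p) by rewrite {1}lastI rev_rcons.
have lW : last r (rev (x :: p)) = x by rewrite rev_cons last_rcons.
rewrite eW el in sW lW.
exists (rev (belast x p)); split => //; split => //.
move: ep; rewrite !pedgesP => /asboolP [i hi he]; apply/asboolP.
exists (size p - i.+1); first by rewrite size_rev size_belast; lia.
rewrite -el -eW E_rev /=; last lia.
rewrite he; congr Ew; lia.
Qed.

Lemma Pl_eq a c l : a != c -> l = [set a; c] -> Pl adj l = tpath_edges adj a c.
Proof.
move=> ac el; apply/setP => e; rewrite inE; apply/asboolP/idP; last first.
  by move=> h; exists a, c.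
move=> [a' [c' [ne [el' ee]]]].
have : a' \in l by rewrite el' !inE eqxx.
have : c' \in l by rewrite el' !inE eqxx orbT.
rewrite el !inE => /orP[/eqP ec|/eqP ec] /orP[/eqP ea|/eqP ea]; subst a' c'.
- by rewrite eqxx in ne.
- by have := subsetP (tpath_sym c a) e ee; rewrite inE.
- by move: ee; rewrite inE.
- by rewrite eqxx in ne.
Qed.

Lemma mem_E w c v : v \in Ew w c -> c.+1 < size w -> exists2 al, al < size w & nth r w al = v.
Proof.
rewrite !inE => /orP[/eqP ->|/eqP ->] h.
  by exists c => //; lia.
by exists c.+1.
Qed.

End Aux.

Unset Implicit Arguments. Set Strict Implicit.
Import Order.TTheory GRing.Theory Num.Theory.

Theorem lemma7 (R : realFieldType) (V : finType) (adj : rel V) (r : V)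
    (L F : {set {set V}}) (w : {set V} -> R)
    (adj_sym : symmetric adj) (adj_irr : irreflexive adj)
    (Gtree : is_tree adj)
    (L_links : forall l, l \in L -> #|l| = 2)
    (w_pos : forall l, l \in L -> (0 < w l)%R)
    (F_sub : F \subset L)
    (F_sol : coverL adj F = edgesG adj)
    (u : {set V}) (t b : V)
    (u_L : u \in L) (u_up : is_uplink adj r u t b)
    (vu : V)
    (vu_anc : anc adj r vu t)
    (vu_cov : Pl adj u \subset coverL adj (Bset adj r F vu))
    (vu_far : forall v', anc adj r v' t ->
        Pl adj u \subset coverL adj (Bset adj r F v') -> dist adj r v' <= dist adj r vu)
    (Fu : {set {set V}})
    (Fu_sub : Fu \subset Bset adj r F vu)
    (Fu_cov : Pl adj u \subset coverL adj Fu)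
    (Fu_min : forall H : {set {set V}}, H \proper Fu -> ~~ (Pl adj u \subset coverL adj H))
    (l : {set V}) (l_Fu : l \in Fu) :
  Pul adj Fu u l != set0 /\
  exists (x : V) (p : seq V), spath adj x p /\ Pul adj Fu u l = pedges x p.
Proof.
clear w_pos w R F_sol vu_far vu_anc vu_cov.
have [Gconn Gacyc] := Gtree.
have spex : forall x y, exists p, spath adj x p /\ last x p = y.
  move=> x y; have /connectP[p pp ->] := Gconn x y.
  by case: (shortenP pp) => p' pp' up' _; exists p'; split => //; apply/andP.
have reprl : forall l', l' \in Fu -> exists2 ww, simple adj ww &
    forall e, (e \in Pl adj l') = `[< exists2 c, c.+1 < size ww & e = Ew r ww c >].
  move=> l' hl'.
  have : l' \in L.
    move/subsetP: Fu_sub => /(_ l' hl'); rewrite inE => /andP[hF _].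
    by move/subsetP: F_sub; apply.
  move/L_links/eqP/cards2P => [a [c [ac el']]].
  have [p [sp lp]] := spex a c.
  exists (a :: p) => //.
  move=> e; rewrite (Pl_eq adj_sym r ac el') -lp (tpath_eq adj_sym Gacyc sp) (pedgesP r).
  by apply/asboolP/asboolP => -[i hi he]; exists i.
have [tb [ue _]] := u_up.
have [s [ss ls]] := spex t b.
set vs := t :: s.
set n := size s.
have hPu : forall e, (e \in Pl adj u) = `[< exists2 k, k < n & e = Ew r vs k >].
  move=> e; rewrite (Pl_eq adj_sym r tb ue) -ls (tpath_eq adj_sym Gacyc ss) (pedgesP r).
  by [].
have svs : simple adj vs by [].
have convS : forall l', l' \in Fu -> forall i k j, i < k < j -> j < n ->
    Ew r vs i \in Pl adj l' -> Ew r vs j \in Pl adj l' -> Ew r vs k \in Pl adj l'.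
  move=> l' hl' i k j /andP[ik kj] jn.
  have [ww sww hww] := reprl l' hl'.
  rewrite !hww => /asboolP [c1 hc1 e1] /asboolP [c2 hc2 e2]; apply/asboolP.
  have m1 : nth r vs i.+1 \in Ew r ww c1 by rewrite -e1 !inE eqxx orbT.
  have m2 : nth r vs j \in Ew r ww c2 by rewrite -e2 !inE eqxx.
  have [al hal eal] := mem_E m1 hc1.
  have [be hbe ebe] := mem_E m2 hc2.
  have hij : i.+1 < j by clear -ik kj; lia.
  have hjs : j < size vs by rewrite /vs /=; clear -jn; lia.
  have hk : i.+1 <= k < j by rewrite ik kj.
  have [c hc ec] := conv adj_sym Gacyc sww svs hij hjs hal hbe eal ebe hk.
  by exists c.
have memPul : forall e, (e \in Pul adj Fu u l) =
    (e \in Pl adj u) && [forall l' in Fu :\ l, e \notin Pl adj l'].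
  move=> e; rewrite /Pul inE andbC; congr (_ && _).
  apply/idP/forall_inP.
    move=> h l' hl'; apply/negP => he; move/negP: h; apply; apply/bigcupP; by exists l'.
  by move=> h; apply/negP => /bigcupP [l' hl' he]; move: (h l' hl'); rewrite he.
have nz : Pul adj Fu u l != set0.
  apply/negP => /eqP h0.
  have := Fu_min _ (properD1 l_Fu); rewrite -setD_eq0.
  by rewrite /Pul /coverL in h0 *; rewrite h0 eqxx.
split => //.
set T := fun k => [&& k < n, Ew r vs k \in Pl adj l & [forall l' in Fu :\ l, Ew r vs k \notin Pl adj l']].
have PulT : forall e, (e \in Pul adj Fu u l) = `[< exists2 k, T k & e = Ew r vs k >].
  move=> e; rewrite memPul hPu; apply/idP/asboolP.
    move=> /andP[/asboolP [k hk ek] hf]; exists k => //.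
    rewrite /T hk -ek hf andbT /=.
    move/subsetP: Fu_cov => /(_ e); rewrite hPu => /(_ (asboolT (ex_intro2 _ _ k hk ek))).
    move/bigcupP => [m hm em].
    case: (eqVneq m l) => [<- //|nml].
    by move/forall_inP: hf => /(_ m); rewrite in_setD1 nml hm /= => /(_ isT); rewrite em.
  move=> [k /and3P [hk hl hf] ->]; rewrite hf andbT.
  by apply/asboolP; exists k.
have exT : exists k, T k.
  have [e he] := set0Pn _ nz.
  by move: he; rewrite PulT => /asboolP [k hk _]; exists k.
have Tn : forall k, T k -> k <= n by move=> k /and3P [hk _ _]; apply: ltnW.
have convT : forall i k j, i < k < j -> T i -> T j -> T k.
  move=> i k j /andP[ik kj] /and3P[hi li fi] /and3P[hj lj fj].
  have kn : k < n by clear -kj hj; lia.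
  have lk : Ew r vs k \in Pl adj l.
    by apply: (convS l l_Fu i k j) => //; rewrite ik.
  rewrite /T kn lk /=.
  apply/forall_inP => l' hl'; apply/negP => Sk.
  have l'Fu : l' \in Fu by move: hl'; rewrite !inE => /andP[].
  have nl' : l' != l by move: hl'; rewrite !inE => /andP[].
  have Si : Ew r vs i \notin Pl adj l' by move/forall_inP: fi; apply.
  have Sj : Ew r vs j \notin Pl adj l' by move/forall_inP: fj; apply.
  have := Fu_min _ (properD1 l'Fu); move/negP; apply.
  apply/subsetP => e he.
  have [k2 hk2 ek2] : exists2 k2, k2 < n & e = Ew r vs k2 by move: he; rewrite hPu => /asboolP.
  move/subsetP: Fu_cov => /(_ e he) /bigcupP [m hm em].
  apply/bigcupP.
  case: (m =P l') => [eml|nml]; last by exists m => //; rewrite !inE hm andbT; apply/eqP.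
  subst m; exists l; first by rewrite !inE l_Fu andbT eq_sym.
  rewrite ek2 in em *.
  have ik2 : i < k2.
    rewrite ltnNge; apply/negP => k2i.
    move: k2i; rewrite leq_eqVlt => /orP[/eqP e2|k2i].
      by move: Si; rewrite -e2 em.
    by move/negP: Si; apply; apply: (convS l' l'Fu k2 i k) => //; rewrite ?k2i ?ik ?kn.
  have k2j : k2 < j.
    rewrite ltnNge; apply/negP => jk2.
    move: jk2; rewrite leq_eqVlt => /orP[/eqP e2|jk2].
      by move: Sj; rewrite e2 em.
    by move/negP: Sj; apply; apply: (convS l' l'Fu k j k2) => //; rewrite ?kj ?jk2.
  by apply: (convS l l_Fu i k2 j) => //; rewrite ?ik2 ?k2j ?hj.
case: (ex_minnP exT) => lo Tlo lomin.
case: (ex_maxnP exT Tn) => hi Thi himax.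
have TP : forall k, T k = (lo <= k <= hi).
  move=> k; apply/idP/idP => [Tk|/andP[h1 h2]].
    by rewrite lomin // himax.
  move: h1; rewrite leq_eqVlt => /orP[/eqP <- //|h1].
  move: h2; rewrite leq_eqVlt => /orP[/eqP -> //|h2].
  by apply: (convT lo k hi) => //; rewrite h1 h2.
have hin : hi < n by case/and3P: Thi.
have lohi := lomin _ Thi.
have szw : lo + (hi - lo).+2 <= size vs by rewrite /vs /=; clear -lohi hin; lia.
have sw := sl_size szw.
have simw := sl_simple lo (hi - lo).+2 svs.
case eW: (sl vs lo (hi - lo).+2) sw simw => [|x p] // [szp] simw.
have EE : forall i, i < (hi - lo).+1 -> Ew r (x :: p) i = Ew r vs (lo + i).
  move=> i hi'; rewrite -eW /Ew !sl_nth ?addnS //; clear -hi'; lia.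
exists x, p; split; first exact: simw.
apply/setP => e; rewrite PulT (pedgesP r); apply/asboolP/asboolP.
  move=> [k hk ->]; exists (k - lo).
    rewrite szp; move: hk; rewrite TP => hk; clear -hk; lia.
  move: hk; rewrite TP => hk.
  rewrite EE; last by clear -hk; lia.
  by congr Ew; clear -hk; lia.
move=> [i hi' ->]; exists (lo + i).
  by rewrite TP; rewrite szp in hi'; clear -hi' lohi; lia.
by rewrite EE //; rewrite -szp.
Qed.
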